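(* Let $\mathbb{X}$ be a reverse differential restriction category (satisfying all of [RD.1]–[RD.9]) with countable disjoint joins. For $g:A\to B$ put $D[g]:=(\iota_0\times 1_A)R[R[g]]\pi_1$, and for $g:A\to A$ put $T(g):=\langle\pi_0 g,D[g]\rangle:A\times A\to A\times A$. Let $f:A\to A$ and let $b_T,b_F:A\to 1$ be maps with $\overline{b_T}\,\overline{b_F}$ nowhere defined. Define $$W:=\bigvee_{i\ge0}(\overline{b_T}f)^i\overline{b_F},\qquad W':=\bigvee_{i\ge0}(\overline{\pi_0b_T}\,T(f))^i\,\overline{\pi_0 b_F},$$ where $h^0=1$ and $h^{i+1}=h\,h^i$. Then $$R[W]=(\iota_0\times 1_A)\,R[W'\pi_1]\,\pi_1 :A\times A\to A,$$ where $\iota_0=\langle 1_A,0\rangle:A\to A\times A$. That is, the reverse derivative of the while-loop is the dagger of the forward-derivative while-loop of the preceding proposition: $[\![v.\mathrm{rd}(x.\texttt{while } b\texttt{ do } f)(a)]\!]$ is obtained by daggering the term $\texttt{let } x=a,y=v\texttt{ in }\mathrm{snd}(\texttt{while }\pi_0b\texttt{ do }(\pi_0f,\mathrm{fd}(x.f)(x).y))$.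
   Context: Composition is written in diagrammatic order: $fg$ means ''first $f$, then $g$''. A restriction category is a category with an operation sending each $f:A\to B$ to a map $\bar f:A\to A$ such that $\bar f f=f$, $\bar f\bar g=\bar g\bar f$ (for $f,g$ with common domain), $\overline{\bar f g}=\bar f\bar g$, and $f\bar g=\overline{fg}\,f$. A map $f$ is total if $\bar f=1$. For parallel maps: - $f\le g$ means $\bar f g=f$; - a nowhere-defined map $\emptyset$ is a least element for $\le$; - $f,g$ are disjoint if $\bar f g$ is nowhere defined; - the join $\bigvee_i f_i$ of a family is its least upper bound for $\le$. ''Countable disjoint joins'' means that every countable family of pairwise disjoint parallel maps has a join, and composition preserves such joins on both sides: $h(\bigvee_i f_i)k=\bigvee_i hf_ik$. The category has restriction products if: - there is an object $1$ with a total map $!_A:A\to 1$ for each $A$ such that every $f:A\to1$ equals $\bar f\,!_A$; - for all $A,B$ there is an object $A\times B$ with total maps $\pi_0,\pi_1$ such that for all $f:C\to A$, $g:C\to B$ there is a unique $\langle f,g\rangle$ with $\langle f,g\rangle\pi_0=\bar g f$ and $\langle f,g\rangle\pi_1=\bar f g$. Write $f\times g=\langle\pi_0f,\pi_1g\rangle$. A Cartesian left additive restriction category is a restriction category with restriction products in which every hom-set is a commutative monoid $(+,0)$ such that: - $\overline{f+g}=\bar f\bar g$ and $\bar 0=1$; - $x(f+g)=xf+xg$ and $x0=\bar x 0$; - $(f+g)\pi_i=f\pi_i+g\pi_i$ and $0\pi_i=0$. Write $\iota_0=\langle 1,0\rangle$ and $\iota_1=\langle 0,1\rangle$. A reverse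 differential restriction category (RDRC) is a Cartesian left additive restriction category with an operation sending each $f:A\to B$ to $R[f]:A\times B\to A$ such that: - [RD.1] $R[f+g]=R[f]+R[g]$ and $R[0]=0$. - [RD.2] $\langle a,b+c\rangle R[f]=\langle a,b\rangle R[f]+\langle a,c\rangle R[f]$ and $\langle a,0\rangle R[f]=\overline{af}\,0$. - [RD.3] $R[\pi_j]=\pi_1\iota_j$. - [RD.4] $R[\langle f,g\rangle]=(1\times\pi_0)R[f]+(1\times\pi_1)R[g]$. - [RD.5] $R[fg]=\langle \pi_0,\langle\pi_0 f,\pi_1\rangle R[g]\rangle R[f]$. - [RD.6] $\langle 1\times\pi_0,\,0\times\pi_1\rangle(\iota_0\times 1)R[R[R[f]]]\pi_1=(1\times\pi_1)R[f]$. - [RD.7] With $g:=(\iota_0\times 1)R[R[f]]\pi_1$, one has $(\iota_0\times1)R[R[g]]\pi_1=\mathrm{ex}\,(\iota_0\times 1)R[R[g]]\pi_1$, where $\mathrm{ex}=\langle\pi_0\times\pi_0,\pi_1\times\pi_1\rangle$. - [RD.8] $\overline{R[f]}=\bar f\times 1$. - [RD.9] $R[\bar f]=(\bar f\times 1)\pi_1$. Semantics of the SDPL formulation: - $[\![\texttt{while } b\texttt{ do } f]\!]=\bigvee_{i\ge0}(\overline{b_T}[\![f]\!])^i\overline{b_F}$; - $[\![v.\mathrm{rd}(x.m)(a)]\!]=\langle\langle1,[\![a]\!]\rangle,[\![v]\!]\rangle R[[\![m]\!]]\pi_1$; - the dagger of $g:A\times B\to C$ is $g^{\dagger[A]}:=(\iota_0\times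 1)R[g]\pi_1:A\times C\to B$. *)

(* Defs.v *)
(* Composition is written in DIAGRAMMATIC order: [f ;; g] = "first f, then g". *)

Record ClarC := {
  Ob :> Type;
  Hom : Ob -> Ob -> Type;
  idm : forall A : Ob, Hom A A;
  comp : forall {A B C : Ob}, Hom A B -> Hom B C -> Hom A C;
  comp_id_l : forall A B (f : Hom A B), comp (idm A) f = f;
  comp_id_r : forall A B (f : Hom A B), comp f (idm B) = f;
  comp_assoc : forall A B C D (f : Hom A B) (g : Hom B C) (h : Hom C D),
      comp (comp f g) h = comp f (comp g h);
  rst : forall {A B : Ob}, Hom A B -> Hom A A;
  rst_R1 : forall A B (f : Hom A B), comp (rst f) f = f;
  rst_R2 : forall A B C (f : Hom A B) (g : Hom A C),
      comp (rst f) (rst g) = comp (rst g) (rst f);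
  rst_R3 : forall A B C (f : Hom A B) (g : Hom A C),
      rst (comp (rst f) g) = comp (rst f) (rst g);
  rst_R4 : forall A B C (f : Hom A B) (g : Hom B C),
      comp f (rst g) = comp (rst (comp f g)) f;
  one : Ob;
  bang : forall A : Ob, Hom A one;
  bang_total : forall A, rst (bang A) = idm A;
  bang_unique : forall A (f : Hom A one), f = comp (rst f) (bang A);
  prod : Ob -> Ob -> Ob;
  p0 : forall A B, Hom (prod A B) A;
  p1 : forall A B, Hom (prod A B) B;
  p0_total : forall A B, rst (p0 A B) = idm (prod A B);
  p1_total : forall A B, rst (p1 A B) = idm (prod A B);
  pair : forall {C A B}, Hom C A -> Hom C B -> Hom C (prod A B);
  pair_p0 : forall C A B (f : Hom C A) (g : Hom C B),
      comp (pair f g) (p0 A B) = comp (rst g) f;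
  pair_p1 : forall C A B (f : Hom C A) (g : Hom C B),
      comp (pair f g) (p1 A B) = comp (rst f) g;
  pair_unique : forall C A B (f : Hom C A) (g : Hom C B) (h : Hom C (prod A B)),
      comp h (p0 A B) = comp (rst g) f -> comp h (p1 A B) = comp (rst f) g ->
      h = pair f g;
  add : forall {A B}, Hom A B -> Hom A B -> Hom A B;
  zero : forall A B, Hom A B;
  add_assoc : forall A B (f g h : Hom A B), add (add f g) h = add f (add g h);
  add_comm : forall A B (f g : Hom A B), add f g = add g f;
  add_zero_l : forall A B (f : Hom A B), add (zero A B) f = f;
  rst_add : forall A B (f g : Hom A B), rst (add f g) = comp (rst f) (rst g);
  rst_zero : forall A B, rst (zero A B) = idm A;
  comp_add_r : forall X A B (x : Hom X A) (f g : Hom A B),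
      comp x (add f g) = add (comp x f) (comp x g);
  comp_zero_r : forall X A B (x : Hom X A),
      comp x (zero A B) = comp (rst x) (zero X B);
  add_p0 : forall C A B (f g : Hom C (prod A B)),
      comp (add f g) (p0 A B) = add (comp f (p0 A B)) (comp g (p0 A B));
  add_p1 : forall C A B (f g : Hom C (prod A B)),
      comp (add f g) (p1 A B) = add (comp f (p1 A B)) (comp g (p1 A B));
  zero_p0 : forall C A B, comp (zero C (prod A B)) (p0 A B) = zero C A;
  zero_p1 : forall C A B, comp (zero C (prod A B)) (p1 A B) = zero C B
}.

Arguments Hom {c}.
Arguments idm {c}.
Arguments comp {c A B C}.
Arguments rst {c A B}.
Arguments one {c}.
Arguments bang {c}.
Arguments prod {c}.
Arguments p0 {c A B}.
Arguments p1 {c A B}.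
Arguments pair {c C A B}.
Arguments add {c A B}.
Arguments zero {c A B}.

Infix ";;" := comp (at level 40, left associativity).
Infix "+++" := add (at level 50, left associativity).

Section Derived.
Context {C : ClarC}.

Definition times {A B A' B' : C} (f : Hom A A') (g : Hom B B')
  : Hom (prod A B) (prod A' B') := pair (p0 ;; f) (p1 ;; g).

Definition iota0 (A B : C) : Hom A (prod A B) := pair (idm A) zero.
Definition iota1 (A B : C) : Hom B (prod A B) := pair zero (idm B).

Definition ex (A B C' D : C)
  : Hom (prod (prod A B) (prod C' D)) (prod (prod A C') (prod B D)) :=
  pair (times p0 p0) (times p1 p1).

Definition le {A B : C} (f g : Hom A B) : Prop := rst f ;; g = f.
Definition nowhere_defined {A B : C} (f : Hom A B) : Prop :=
  forall g : Hom A B, le f g.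
Definition disjoint {A B B' : C} (f : Hom A B) (g : Hom A B') : Prop :=
  nowhere_defined (rst f ;; g).
Definition is_join {I : Type} {A B : C} (F : I -> Hom A B) (j : Hom A B) : Prop :=
  (forall i, le (F i) j) /\ (forall u, (forall i, le (F i) u) -> le j u).

Definition countable (I : Type) : Prop :=
  exists e : I -> nat, forall x y, e x = e y -> x = y.
Definition pairwise_disjoint {I : Type} {A B : C} (F : I -> Hom A B) : Prop :=
  forall i j, i <> j -> disjoint (F i) (F j).

Fixpoint pw {A : C} (h : Hom A A) (i : nat) : Hom A A :=
  match i with
  | O => idm A
  | S i' => h ;; pw h i'
  end.

End Derived.

Definition has_countable_disjoint_joins (C : ClarC) : Prop :=
  forall (A B : C) (I : Type) (F : I -> Hom A B),
    countable I -> pairwise_disjoint F ->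
    (exists j, is_join F j) /\
    (forall j, is_join F j ->
       forall (X Y : C) (h : Hom X A) (k : Hom B Y),
         is_join (fun i => h ;; F i ;; k) (h ;; j ;; k)).

Definition Rop (C : ClarC) : Type :=
  forall A B : C, Hom A B -> Hom (prod A B) A.

Section RDAxioms.
Context {C : ClarC} (R : Rop C).
Arguments R {A B}.

Definition Dfwd {A B : C} (g : Hom A B) : Hom (prod A A) B :=
  times (iota0 A B) (idm A) ;; R (R g) ;; p1.

Definition RD1 : Prop :=
  (forall (A B : C) (f g : Hom A B), R (f +++ g) = R f +++ R g) /\
  (forall (A B : C), R (@zero C A B) = zero).
Definition RD2 : Prop :=
  (forall (X A B : C) (f : Hom A B) (a : Hom X A) (b c : Hom X B),
     pair a (b +++ c) ;; R f = pair a b ;; R f +++ pair a c ;; R f) /\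
  (forall (X A B : C) (f : Hom A B) (a : Hom X A),
     pair a zero ;; R f = rst (a ;; f) ;; zero).
Definition RD3 : Prop :=
  (forall A B : C, R (@p0 C A B) = p1 ;; iota0 A B) /\
  (forall A B : C, R (@p1 C A B) = p1 ;; iota1 A B).
Definition RD4 : Prop :=
  forall (X A B : C) (f : Hom X A) (g : Hom X B),
    R (pair f g) = times (idm X) p0 ;; R f +++ times (idm X) p1 ;; R g.
Definition RD5 : Prop :=
  forall (A B D : C) (f : Hom A B) (g : Hom B D),
    R (f ;; g) = pair p0 (pair (p0 ;; f) p1 ;; R g) ;; R f.
Definition RD6 : Prop :=
  forall (A B : C) (f : Hom A B),
    pair (times (idm A) (@p0 C B B)) (times (@zero C A A) (@p1 C B B))
      ;; times (iota0 (prod A B) A) (idm (prod A B)) ;; R (R (R f)) ;; p1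
    = times (idm A) p1 ;; R f.
Definition RD7 : Prop :=
  forall (A B : C) (f : Hom A B),
    let g := times (iota0 A B) (idm A) ;; R (R f) ;; p1 in
    Dfwd g = ex A A A A ;; Dfwd g.
Definition RD8 : Prop :=
  forall (A B : C) (f : Hom A B), rst (R f) = times (rst f) (idm B).
Definition RD9 : Prop :=
  forall (A B : C) (f : Hom A B), R (rst f) = times (rst f) (idm A) ;; p1.

End RDAxioms.

Record RDRC := {
  base :> ClarC;
  RD : Rop base;
  rd1 : RD1 RD; rd2 : RD2 RD; rd3 : RD3 RD; rd4 : RD4 RD; rd5 : RD5 RD;
  rd6 : RD6 RD; rd7 : RD7 RD; rd8 : RD8 RD; rd9 : RD9 RD
}.

Arguments RD {r A B}.

Definition Tfd {X : RDRC} {A : X} (g : Hom A A) : Hom (prod A A) (prod A A) :=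
  pair (p0 ;; g) (Dfwd (@RD X) g).

(* Main.v *)
Require Import Defs.
From Stdlib Require Import Setoid Lia Arith.


Ltac ra := repeat rewrite comp_assoc.

Lemma rst_idm {C : ClarC} (A : C) : rst (idm A) = idm A.
Proof. rewrite <- (comp_id_r _ _ _ (rst (idm A))). apply rst_R1. Qed.

Lemma rst_rst {C : ClarC} {A B : C} (f : Hom A B) : rst (rst f) = rst f.
Proof.
  rewrite <- (comp_id_r _ _ _ (rst f)) at 1. rewrite rst_R3, rst_idm. apply comp_id_r.
Qed.

Lemma rst_idem {C : ClarC} {A B : C} (f : Hom A B) : rst f ;; rst f = rst f.
Proof. rewrite <- (rst_rst f) at 1. apply rst_R1. Qed.

Lemma rst_comp_rst {C : ClarC} {A B D : C} (f : Hom A B) (g : Hom B D) :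
  rst (f ;; rst g) = rst (f ;; g).
Proof.
  rewrite rst_R4, rst_R3, rst_R2, <- rst_R3.
  rewrite <- comp_assoc, rst_R1. reflexivity.
Qed.

Lemma rst_total {C : ClarC} {A B D : C} (f : Hom A B) (g : Hom B D) :
  rst g = idm B -> rst (f ;; g) = rst f.
Proof. intro H. rewrite <- rst_comp_rst, H, comp_id_r. reflexivity. Qed.

Lemma rst_comp_le {C : ClarC} {A B D : C} (f : Hom A B) (g : Hom B D) :
  rst (f ;; g) ;; rst f = rst (f ;; g).
Proof.
  rewrite rst_R2. rewrite <- rst_R3. rewrite <- comp_assoc, rst_R1. reflexivity.
Qed.

Lemma rst_comm_idem {C : ClarC} {A B D : C} (f : Hom A B) (g : Hom A D) :
  rst f ;; rst g ;; rst f = rst f ;; rst g.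
Proof. rewrite rst_R2, comp_assoc, rst_idem. reflexivity. Qed.

Lemma comp_pair {C : ClarC} {X Y A B : C} (h : Hom X Y) (f : Hom Y A) (g : Hom Y B) :
  h ;; pair f g = pair (h ;; f) (h ;; g).
Proof.
  apply pair_unique.
  - rewrite comp_assoc, pair_p0, <- comp_assoc, rst_R4. ra. reflexivity.
  - rewrite comp_assoc, pair_p1, <- comp_assoc, rst_R4. ra. reflexivity.
Qed.

Lemma pair_eta {C : ClarC} {A B : C} : pair (@p0 C A B) p1 = idm _.
Proof.
  symmetry. apply pair_unique.
  - rewrite comp_id_l, p1_total, comp_id_l. reflexivity.
  - rewrite comp_id_l, p0_total, comp_id_l. reflexivity.
Qed.

Lemma rst_pair {C : ClarC} {X A B : C} (f : Hom X A) (g : Hom X B) :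
  rst (pair f g) = rst f ;; rst g.
Proof.
  rewrite <- (rst_total (pair f g) p0 (p0_total _ _ _)), pair_p0, rst_R3, rst_R2. reflexivity.
Qed.

Lemma pair_rst_l {C : ClarC} {X Y A B : C} (x : Hom X Y) (f : Hom X A) (g : Hom X B) :
  pair (rst x ;; f) g = rst x ;; pair f g.
Proof.
  symmetry. apply pair_unique.
  - rewrite comp_assoc, pair_p0, <- comp_assoc, rst_R2, comp_assoc. reflexivity.
  - rewrite comp_assoc, pair_p1, rst_R3, comp_assoc. reflexivity.
Qed.

Lemma pair_rst_r {C : ClarC} {X Y A B : C} (x : Hom X Y) (f : Hom X A) (g : Hom X B) :
  pair f (rst x ;; g) = rst x ;; pair f g.
Proof.
  symmetry. apply pair_unique.
  - rewrite comp_assoc, pair_p0, rst_R3, comp_assoc. reflexivity.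
  - rewrite comp_assoc, pair_p1, <- comp_assoc, rst_R2, comp_assoc. reflexivity.
Qed.

Lemma absorb {C : ClarC} {X Y B : C} (x : Hom X Y) (y : Hom X B) :
  rst y ;; rst x = rst y -> rst x ;; y = y.
Proof.
  intro H. rewrite <- (rst_R1 _ _ _ y) at 1.
  rewrite <- comp_assoc, <- rst_R2, H. apply rst_R1.
Qed.

Lemma pair_absorb_r {C : ClarC} {X A B : C} (f : Hom X A) (g : Hom X B) :
  pair f (rst f ;; g) = pair f g.
Proof.
  rewrite pair_rst_r. apply absorb. rewrite rst_pair. apply rst_comm_idem.
Qed.

Lemma pair_absorb_l {C : ClarC} {X A B : C} (f : Hom X A) (g : Hom X B) :
  pair (rst g ;; f) g = pair f g.
Proof.
  rewrite pair_rst_l. apply absorb. rewrite rst_pair, comp_assoc, rst_idem. reflexivity.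
Qed.

Lemma rst_tot2 {C : ClarC} {A B D : C} (f : Hom A B) (g : Hom B D) :
  rst f = idm A -> rst g = idm B -> rst (f ;; g) = idm A.
Proof. intros H1 H2. rewrite rst_total by exact H2. exact H1. Qed.

Lemma rst_pair_tot {C : ClarC} {X A B : C} (f : Hom X A) (g : Hom X B) :
  rst f = idm X -> rst g = idm X -> rst (pair f g) = idm X.
Proof. intros H1 H2. rewrite rst_pair, H1, H2. apply comp_id_l. Qed.

Lemma rst_iota0 {C : ClarC} (A B : C) : rst (iota0 A B) = idm A.
Proof. unfold iota0. apply rst_pair_tot. apply rst_idm. apply rst_zero. Qed.
Lemma rst_iota1 {C : ClarC} (A B : C) : rst (iota1 A B) = idm B.
Proof. unfold iota1. apply rst_pair_tot. apply rst_zero. apply rst_idm. Qed.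

Ltac tot := repeat first
  [ apply rst_tot2 | apply rst_pair_tot | apply rst_idm | apply p0_total | apply p1_total
  | apply rst_zero | apply rst_iota0 | apply rst_iota1 | apply bang_total ].

Lemma comp_tot {C : ClarC} {A B : C} (f : Hom A B) : rst f = idm A -> rst f ;; f = f.
Proof. intros. apply rst_R1. Qed.

Lemma tot_l {C : ClarC} {A B D : C} (x : Hom A B) (y : Hom A D) : rst x = idm A -> rst x ;; y = y.
Proof. intro H. rewrite H. apply comp_id_l. Qed.

Lemma times_p0 {C : ClarC} {A B A' B' : C} (f : Hom A A') (g : Hom B B') :
  times f g ;; p0 = rst (p1 ;; g) ;; p0 ;; f.
Proof. unfold times. rewrite pair_p0. ra. reflexivity. Qed.
Lemma times_p1 {C : ClarC} {A B A' B' : C} (f : Hom A A') (g : Hom B B') :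
  times f g ;; p1 = rst (p0 ;; f) ;; p1 ;; g.
Proof. unfold times. rewrite pair_p1. ra. reflexivity. Qed.

Lemma times_p0_tot {C : ClarC} {A B A' B' : C} (f : Hom A A') (g : Hom B B') :
  rst g = idm B -> times f g ;; p0 = p0 ;; f.
Proof. intro H. rewrite times_p0, (rst_total p1 g H), p1_total, comp_id_l. reflexivity. Qed.
Lemma times_p1_tot {C : ClarC} {A B A' B' : C} (f : Hom A A') (g : Hom B B') :
  rst f = idm A -> times f g ;; p1 = p1 ;; g.
Proof. intro H. rewrite times_p1, (rst_total p0 f H), p0_total, comp_id_l. reflexivity. Qed.

Lemma times_idm {C : ClarC} (A B : C) : times (idm A) (idm B) = idm (prod A B).
Proof. unfold times. rewrite !comp_id_r. apply pair_eta. Qed.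

Lemma pair_p0p1 {C : ClarC} {X A B : C} (h : Hom X (prod A B)) : pair (h ;; p0) (h ;; p1) = h.
Proof. rewrite <- comp_pair, pair_eta. apply comp_id_r. Qed.

Lemma times_rst_idm {C : ClarC} {A B D : C} (x : Hom A D) :
  times (rst x) (idm B) = rst (p0 ;; x).
Proof.
  unfold times. rewrite comp_id_r, rst_R4, pair_rst_l, pair_eta, comp_id_r.
  reflexivity.
Qed.

Lemma comp_zero_tot {C : ClarC} {X A B : C} (x : Hom X A) : rst x = idm X -> x ;; @zero C A B = zero.
Proof. intro H. rewrite comp_zero_r, H. apply comp_id_l. Qed.

Lemma add_zero_r {C : ClarC} {A B : C} (f : Hom A B) : f +++ zero = f.
Proof. rewrite add_comm. apply add_zero_l. Qed.

Lemma zero_absorb {C : ClarC} {A B D : C} (x : Hom A D) (y : Hom A B) :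
  rst x ;; zero +++ y = rst x ;; y.
Proof.
  assert (E1 : rst x ;; y = rst (rst x ;; y) ;; zero +++ rst x ;; y).
  { rewrite <- (rst_R1 _ _ _ (rst x ;; y)) at 1.
    rewrite <- (add_zero_l _ _ _ (rst x ;; y)) at 2.
    rewrite comp_add_r. f_equal.
    rewrite rst_R3, <- comp_assoc, (comp_assoc _ _ _ _ _ (rst x)), rst_R2.
    rewrite <- comp_assoc, rst_idem, comp_assoc, rst_R1. reflexivity. }
  rewrite E1. rewrite <- (rst_R1 _ _ _ (rst x ;; zero +++ y)).
  rewrite rst_add, rst_R3, rst_zero, comp_id_r, comp_add_r.
  f_equal.
  - rewrite rst_R3. rewrite <- comp_assoc, (comp_assoc _ _ _ _ _ (rst x) (rst y) (rst x)).
    rewrite (rst_R2 _ _ _ _ y x), <- comp_assoc, rst_idem. reflexivity.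
  - rewrite comp_assoc, rst_R1. reflexivity.
Qed.

Ltac tot2 := unfold times, iota0, iota1; repeat first
  [ apply rst_tot2 | apply rst_pair_tot | apply rst_idm | apply p0_total | apply p1_total
  | apply rst_zero | apply bang_total ].

Lemma pair_p1_p0 {C : ClarC} {X B D : C} (Y : Hom (prod X B) D) : pair (@p0 C X B) Y ;; p1 = Y.
Proof. rewrite pair_p1, p0_total. apply comp_id_l. Qed.

Lemma pair_times {C : ClarC} {X A B A' B' : C} (a : Hom X A) (b : Hom X B) (f : Hom A A') (g : Hom B B') :
  pair a b ;; times f g = pair (rst b ;; a ;; f) (rst a ;; b ;; g).
Proof. unfold times. rewrite comp_pair, <- !comp_assoc, pair_p0, pair_p1. reflexivity. Qed.

Lemma pair_times_tot {C : ClarC} {X A B A' B' : C} (a : Hom X A) (b : Hom X B) (f : Hom A A') (g : Hom B B') :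
  rst a = idm X -> rst b = idm X -> pair a b ;; times f g = pair (a ;; f) (b ;; g).
Proof. intros Ha Hb. rewrite pair_times, Ha, Hb, !comp_id_l. reflexivity. Qed.

Lemma comp_times_tot {C : ClarC} {X Y A B A' B' : C} (h : Hom X (prod A B)) (f : Hom A A') (g : Hom B B') :
  rst h = idm X -> h ;; times f g = pair (h ;; p0 ;; f) (h ;; p1 ;; g).
Proof.
  intro H. rewrite <- (pair_p0p1 h) at 1. apply pair_times_tot; rewrite rst_total; auto; tot2.
Qed.

Lemma iota0_p0 {C : ClarC} (A B : C) : iota0 A B ;; p0 = idm A.
Proof. unfold iota0. rewrite pair_p0, rst_zero. apply comp_id_l. Qed.
Lemma iota0_p1 {C : ClarC} (A B : C) : iota0 A B ;; p1 = zero.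
Proof. unfold iota0. rewrite pair_p1, rst_idm. apply comp_id_l. Qed.
Lemma iota1_p0 {C : ClarC} (A B : C) : iota1 A B ;; p0 = zero.
Proof. unfold iota1. rewrite pair_p0, rst_idm. apply comp_id_l. Qed.
Lemma iota1_p1 {C : ClarC} (A B : C) : iota1 A B ;; p1 = idm B.
Proof. unfold iota1. rewrite pair_p1, rst_zero. apply comp_id_l. Qed.

Lemma pair_p0_tot {C : ClarC} {X A B : C} (f : Hom X A) (g : Hom X B) :
  rst g = idm X -> pair f g ;; p0 = f.
Proof. intro H. rewrite pair_p0, H. apply comp_id_l. Qed.
Lemma pair_p1_tot {C : ClarC} {X A B : C} (f : Hom X A) (g : Hom X B) :
  rst f = idm X -> pair f g ;; p1 = g.
Proof. intro H. rewrite pair_p1, H. apply comp_id_l. Qed.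
Lemma pair_p0_tot_r {C : ClarC} {X A B Y : C} (f : Hom X A) (g : Hom X B) (k : Hom A Y) :
  rst g = idm X -> pair f g ;; (p0 ;; k) = f ;; k.
Proof. intro H. rewrite <- comp_assoc, pair_p0_tot; auto. Qed.
Lemma pair_p1_tot_r {C : ClarC} {X A B Y : C} (f : Hom X A) (g : Hom X B) (k : Hom B Y) :
  rst f = idm X -> pair f g ;; (p1 ;; k) = g ;; k.
Proof. intro H. rewrite <- comp_assoc, pair_p1_tot; auto. Qed.
Lemma zero_p0_r {C : ClarC} {X A B Y : C} (k : Hom A Y) : @zero C X (prod A B) ;; (p0 ;; k) = zero ;; k.
Proof. rewrite <- comp_assoc, zero_p0. reflexivity. Qed.
Lemma zero_p1_r {C : ClarC} {X A B Y : C} (k : Hom B Y) : @zero C X (prod A B) ;; (p1 ;; k) = zero ;; k.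
Proof. rewrite <- comp_assoc, zero_p1. reflexivity. Qed.

Lemma pair_ext {C : ClarC} {X A B : C} (h k : Hom X (prod A B)) :
  h ;; p0 = k ;; p0 -> h ;; p1 = k ;; p1 -> h = k.
Proof. intros E1 E2. rewrite <- (pair_p0p1 h), <- (pair_p0p1 k), E1, E2. reflexivity. Qed.

Ltac simp := unfold times, iota0, iota1; repeat (ra; first
  [ rewrite pair_p0_tot_r by tot2 | rewrite pair_p1_tot_r by tot2
  | rewrite pair_p0_tot by tot2 | rewrite pair_p1_tot by tot2
  | rewrite zero_p0_r | rewrite zero_p1_r | rewrite zero_p0 | rewrite zero_p1
  | rewrite comp_id_l | rewrite comp_id_r
  | rewrite comp_zero_tot by tot2 ]).

Lemma le_antisym {C : ClarC} {A B : C} (f g : Hom A B) : le f g -> le g f -> f = g.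
Proof.
  unfold le. intros H1 H2.
  assert (E1 : rst f = rst f ;; rst g) by (rewrite <- rst_R3, H1; reflexivity).
  assert (E2 : rst g = rst g ;; rst f) by (rewrite <- rst_R3, H2; reflexivity).
  assert (E : rst f = rst g) by (rewrite E1, rst_R2, <- E2; reflexivity).
  rewrite <- H1, E. apply rst_R1.
Qed.

Lemma join_unique {C : ClarC} {I : Type} {A B : C} (F G : I -> Hom A B) (j1 j2 : Hom A B) :
  (forall i, F i = G i) -> is_join F j1 -> is_join G j2 -> j1 = j2.
Proof.
  intros E [H1 H1'] [H2 H2']. apply le_antisym.
  - apply H1'. intro i. rewrite E. apply H2.
  - apply H2'. intro i. rewrite <- E. apply H1.
Qed.

Lemma is_join_ext {C : ClarC} {I : Type} {A B : C} (F G : I -> Hom A B) (j : Hom A B) :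
  (forall i, F i = G i) -> is_join F j -> is_join G j.
Proof.
  intros E [H1 H2]. split.
  - intro i. rewrite <- E. apply H1.
  - intros u Hu. apply H2. intro i. rewrite E. apply Hu.
Qed.

Lemma empty_join {C : ClarC} (HJ : has_countable_disjoint_joins C) (A B : C) :
  exists e : Hom A B, forall X Y (h : Hom X A) (k : Hom B Y), nowhere_defined (h ;; e ;; k).
Proof.
  destruct (HJ A B Empty_set (fun i : Empty_set => match i return Hom A B with end)) as [[j Hj] Hc].
  - exists (fun i : Empty_set => match i with end). intros x. destruct x.
  - intros i. destruct i.
  - exists j. intros X Y h k. destruct (Hc j Hj X Y h k) as [_ H].
    intro u. apply H. intro i. destruct i.
Qed.

Lemma ND_unique {C : ClarC} {A B : C} (n m : Hom A B) :
  nowhere_defined n -> nowhere_defined m -> n = m.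
Proof. intros H1 H2. apply le_antisym; [apply H1 | apply H2]. Qed.

Lemma ND_comp {C : ClarC} (HJ : has_countable_disjoint_joins C) {X A B Y : C}
  (h : Hom X A) (n : Hom A B) (k : Hom B Y) :
  nowhere_defined n -> nowhere_defined (h ;; n ;; k).
Proof.
  intro Hn. destruct (empty_join HJ A B) as [e He].
  assert (E : n = e).
  { apply ND_unique; auto. specialize (He A B (idm A) (idm B)).
    rewrite comp_id_l, comp_id_r in He. exact He. }
  subst. apply He.
Qed.

Lemma ND_comp_l {C : ClarC} (HJ : has_countable_disjoint_joins C) {X A B : C}
  (h : Hom X A) (n : Hom A B) : nowhere_defined n -> nowhere_defined (h ;; n).
Proof. intro H. rewrite <- (comp_id_r _ _ _ (h ;; n)). apply ND_comp; auto. Qed.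

Lemma ND_comp_r {C : ClarC} (HJ : has_countable_disjoint_joins C) {A B Y : C}
  (n : Hom A B) (k : Hom B Y) : nowhere_defined n -> nowhere_defined (n ;; k).
Proof. intro H. rewrite <- (comp_id_l _ _ _ n). apply ND_comp; auto. Qed.

Lemma ND_rst {C : ClarC} (HJ : has_countable_disjoint_joins C) {A B : C} (n : Hom A B) :
  nowhere_defined n -> nowhere_defined (rst n).
Proof.
  intro Hn. destruct (empty_join HJ A A) as [m Hm].
  assert (Hm0 : nowhere_defined m).
  { specialize (Hm A A (idm A) (idm A)). rewrite comp_id_l, comp_id_r in Hm. exact Hm. }
  assert (Rm : rst m = m).
  { rewrite <- (comp_id_r _ _ _ (rst m)). apply Hm0. }
  assert (E : m ;; n = n).
  { apply ND_unique; auto. apply ND_comp_r; auto. }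
  rewrite <- E, <- Rm, rst_R3, Rm. apply ND_comp_r; auto.
Qed.

Lemma disj_to {C : ClarC} (HJ : has_countable_disjoint_joins C) {A B B' : C}
  (f : Hom A B) (g : Hom A B') : disjoint f g -> nowhere_defined (rst f ;; rst g).
Proof. unfold disjoint. intro H. rewrite <- rst_R3. apply ND_rst; auto. Qed.

Lemma disj_of {C : ClarC} (HJ : has_countable_disjoint_joins C) {A B B' : C}
  (f : Hom A B) (g : Hom A B') : nowhere_defined (rst f ;; rst g) -> disjoint f g.
Proof.
  unfold disjoint. intro H. rewrite <- (rst_R1 _ _ _ g), <- comp_assoc.
  apply ND_comp_r; auto.
Qed.

Lemma disj_rst_eq {C : ClarC} (HJ : has_countable_disjoint_joins C) {A B B' D D' : C}
  (f : Hom A B) (g : Hom A B') (f' : Hom A D) (g' : Hom A D') :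
  rst f = rst f' -> rst g = rst g' -> disjoint f g -> disjoint f' g'.
Proof.
  intros E1 E2 H. apply disj_of; auto. rewrite <- E1, <- E2. apply disj_to; auto.
Qed.

Lemma disj_sym {C : ClarC} (HJ : has_countable_disjoint_joins C) {A B B' : C}
  (f : Hom A B) (g : Hom A B') : disjoint f g -> disjoint g f.
Proof. intro H. apply disj_of; auto. rewrite rst_R2. apply disj_to; auto. Qed.

Lemma disj_comp {C : ClarC} (HJ : has_countable_disjoint_joins C) {X A B Y : C}
  (h : Hom X A) (f g : Hom A B) (k : Hom B Y) :
  disjoint f g -> disjoint (h ;; f ;; k) (h ;; g ;; k).
Proof.
  unfold disjoint. intro H.
  assert (E : rst (h ;; f ;; k) ;; (h ;; g ;; k) = (rst (h ;; f ;; k) ;; h) ;; (rst f ;; g) ;; k).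
  { assert (L : rst (h ;; f ;; k) ;; rst (h ;; f) = rst (h ;; f ;; k)) by apply rst_comp_le.
    symmetry.
    rewrite (comp_assoc _ _ _ _ _ (rst (h ;; f ;; k)) h).
    rewrite <- (comp_assoc _ _ _ _ _ h (rst f) g), rst_R4.
    set (r := rst (h ;; f ;; k)) in *. set (s := rst (h ;; f)) in *. ra. rewrite <- (comp_assoc _ _ _ _ _ r s), L. reflexivity. }
  rewrite E. apply ND_comp; auto.
Qed.

Lemma pw_add {C : ClarC} {A : C} (u : Hom A A) (i k : nat) : pw u (i + k) = pw u i ;; pw u k.
Proof.
  induction i; simpl.
  - rewrite comp_id_l. reflexivity.
  - rewrite IHi, comp_assoc. reflexivity.
Qed.

Lemma pw_disjoint {C : ClarC} (HJ : has_countable_disjoint_joins C) {A Z : C}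
  (u : Hom A A) (x : Hom A Z) :
  nowhere_defined (rst x ;; u) -> pairwise_disjoint (fun i => pw u i ;; rst x).
Proof.
  intro H.
  assert (Hlt : forall i j, i < j -> disjoint (pw u i ;; rst x) (pw u j ;; rst x)).
  { intros i j Hij. replace j with (i + S (j - i - 1)) by lia.
    unfold disjoint. rewrite pw_add. simpl.
    set (m := j - i - 1).
    assert (M : rst (pw u i ;; rst x) ;; pw u i = pw u i ;; rst x).
    { rewrite <- rst_R4, rst_rst. reflexivity. }
    replace (rst (pw u i ;; rst x) ;; (pw u i ;; (u ;; pw u m) ;; rst x))
      with (rst (pw u i ;; rst x) ;; pw u i ;; (u ;; pw u m) ;; rst x) by (ra; reflexivity).
    rewrite M. replace (pw u i ;; rst x ;; (u ;; pw u m) ;; rst x)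
      with (pw u i ;; (rst x ;; u) ;; (pw u m ;; rst x)) by (ra; reflexivity).
    apply ND_comp; auto. }
  intros i j Hij. destruct (Nat.lt_total i j) as [L|[L|L]].
  - apply Hlt; auto.
  - contradiction.
  - apply disj_sym; auto.
Qed.

Lemma R_rst_eq (X : RDRC) {A B : X} (g : Hom A B) : rst (RD g) = rst (p0 ;; g).
Proof. rewrite (rd8 X). apply times_rst_idm. Qed.

Lemma rst_xR (X : RDRC) {Z A B : X} (x : Hom Z (prod A B)) (g : Hom A B) :
  rst (x ;; RD g) = rst (x ;; p0 ;; g).
Proof. rewrite <- rst_comp_rst, R_rst_eq, rst_comp_rst, comp_assoc. reflexivity. Qed.

Lemma R_idm (X : RDRC) (A : X) : RD (idm A) = p1.
Proof.
  pose proof (rd9 X A A (idm A)) as H. rewrite rst_idm, times_idm, comp_id_l in H. exact H.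
Qed.

Lemma R_rst (X : RDRC) {A D : X} (x : Hom A D) : RD (rst x) = rst (p0 ;; x) ;; p1.
Proof. rewrite (rd9 X), times_rst_idm. reflexivity. Qed.

Lemma R_p0 (X : RDRC) (A B : X) : RD (@p0 X A B) = p1 ;; iota0 A B.
Proof. apply (proj1 (rd3 X)). Qed.
Lemma R_p1 (X : RDRC) (A B : X) : RD (@p1 X A B) = p1 ;; iota1 A B.
Proof. apply (proj2 (rd3 X)). Qed.
Lemma R_zero (X : RDRC) (A B : X) : RD (@zero X A B) = zero.
Proof. apply (proj2 (rd1 X)). Qed.

Lemma R_le (X : RDRC) {A B : X} (f g : Hom A B) : le f g -> RD f = rst (p0 ;; f) ;; RD g.
Proof.
  unfold le. intro H.
  transitivity (RD (rst f ;; g)); [rewrite H; reflexivity|].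
  rewrite (rd5 X), R_rst.
  rewrite rst_R4, pair_rst_l, pair_eta, comp_id_r.
  set (Y := rst (p0 ;; f) ;; RD g).
  rewrite <- comp_assoc, rst_R4.
  rewrite <- (comp_assoc _ _ _ _ _ (pair p0 Y) p0 f), pair_p0, (comp_assoc _ _ _ _ _ (rst Y) p0 f), rst_R3.
  rewrite (comp_assoc _ _ _ _ _ _ (pair p0 Y) p1), pair_p1_p0.
  rewrite rst_R2, comp_assoc, rst_R1. unfold Y. rewrite <- comp_assoc, rst_idem. reflexivity.
Qed.

Lemma R_p1post (X : RDRC) {A B D : X} (G : Hom A (prod B D)) :
  RD (G ;; p1) = times (idm A) (iota1 B D) ;; RD G.
Proof.
  rewrite (rd5 X), R_p1, <- comp_assoc, pair_p1, comp_assoc, pair_rst_r.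
  unfold times. rewrite comp_id_r.
  rewrite comp_assoc. apply absorb.
  rewrite rst_xR, pair_p0.
  assert (T : rst (@p1 X A D ;; iota1 B D) = idm _) by tot2.
  rewrite T, comp_id_l. apply rst_idem.
Qed.

Lemma R_iota0 (X : RDRC) (A B : X) : RD (iota0 A B) = p1 ;; p0.
Proof.
  unfold iota0. rewrite (rd4 X), R_idm, R_zero, comp_zero_tot by tot2.
  rewrite add_zero_r, times_p1_tot by apply rst_idm. reflexivity.
Qed.

Lemma times_p0_idm_sum {C : ClarC} (A B D : C) :
  times (@p0 C A B) (idm D) = p0 ;; p0 ;; iota0 A D +++ p1 ;; iota1 A D.
Proof.
  unfold times. symmetry. apply pair_unique.
  - rewrite add_p0, !comp_assoc, iota0_p0, iota1_p0, comp_id_r, comp_zero_tot by tot2.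
    rewrite add_zero_r, rst_total, p1_total, comp_id_l by apply rst_idm. reflexivity.
  - rewrite add_p1, !comp_assoc, iota0_p1, iota1_p1, comp_id_r, comp_zero_tot by tot2.
    rewrite comp_zero_tot by tot2. rewrite add_zero_l, (rst_total p0 p0), p0_total, comp_id_l by apply p0_total. reflexivity.
Qed.

Lemma R_times_iota0 (X : RDRC) (A B D : X) :
  RD (times (iota0 A B) (idm D)) = p1 ;; times p0 (idm D).
Proof.
  unfold times at 1. rewrite (rd4 X), comp_id_r, R_p1, (rd5 X), R_iota0, R_p0.
  rewrite <- (comp_assoc _ _ _ _ _ (pair p0 _) p1 (iota0 A D)), pair_p1_p0.
  rewrite <- (comp_assoc _ _ _ _ _ (pair (p0 ;; p0) p1) p1 p0), pair_p1.
  rewrite (rst_total p0 p0), p0_total, comp_id_l by apply p0_total.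
  ra.
  rewrite <- (comp_assoc _ _ _ _ _ (times (idm _) p0) p1), <- (comp_assoc _ _ _ _ _ (times (idm _) p1) p1).
  rewrite !times_p1_tot by apply rst_idm.
  rewrite times_p0_idm_sum, comp_add_r. ra. reflexivity.
Qed.

Lemma L1 (X : RDRC) {A B : X} (g : Hom A B) :
  times (iota0 A A) (idm B) ;; RD (Dfwd (@RD X) g) ;; p1 = RD g.
Proof.
  unfold Dfwd. set (M := RD (RD g)).
  rewrite R_p1post, (rd5 X), R_times_iota0.
  rewrite <- (comp_assoc _ _ _ _ _ (pair p0 _) p1), pair_p1_p0.
  ra. rewrite times_p1_tot, comp_id_r by apply p0_total.
  pose proof (rd6 X A B g) as H6. fold M in H6.
  assert (H6' : times (idm A) (iota1 B B) ;; (pair (times (idm A) p0) (times zero p1)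
     ;; times (iota0 (prod A B) A) (idm (prod A B)) ;; RD M ;; p1) = RD g).
  { rewrite H6. rewrite <- comp_assoc. rewrite <- (comp_id_l _ _ _ (RD g)) at 2. f_equal.
    repeat apply pair_ext; simp; reflexivity. }
  rewrite <- H6'.
  assert (E : times (iota0 A A) (idm B) ;; times (idm (prod A A)) (iota1 A B) ;; pair (p0 ;; times (iota0 A B) (idm A)) p1 = times (idm A) (iota1 B B) ;; pair (times (idm A) p0) (times zero p1) ;; times (iota0 (prod A B) A) (idm (prod A B))).
  { repeat apply pair_ext; simp; reflexivity. }
  transitivity ((times (iota0 A A) (idm B) ;; times (idm (prod A A)) (iota1 A B) ;; pair (p0 ;; times (iota0 A B) (idm A)) p1) ;; (RD M ;; p1)).
  { ra. reflexivity. }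
  rewrite E. ra. reflexivity.
Qed.

Definition PQ (X : RDRC) {A : X} (G : Hom (prod A A) (prod A A)) (g : Hom A A) : Prop :=
  iota0 A A ;; G = g ;; iota0 A A /\
  pair (p0 ;; iota0 A A) p1 ;; RD G ;; p1 = times (idm A) p1 ;; RD g.

Lemma D0 (X : RDRC) {A B : X} (g : Hom A B) : iota0 A A ;; Dfwd (@RD X) g = rst g ;; zero.
Proof.
  unfold Dfwd. rewrite <- !comp_assoc.
  assert (E : iota0 A A ;; times (iota0 A B) (idm A) = pair (iota0 A B) zero).
  { repeat apply pair_ext; simp; reflexivity. }
  rewrite E, (proj2 (rd2 X)), comp_assoc, zero_p1, rst_xR.
  rewrite iota0_p0, comp_id_l. reflexivity.
Qed.

Lemma PQ_comp (X : RDRC) {A : X} (G1 G2 : Hom (prod A A) (prod A A)) (g1 g2 : Hom A A) :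
  PQ X G1 g1 -> PQ X G2 g2 -> PQ X (G1 ;; G2) (g1 ;; g2).
Proof.
  intros [P1 Q1] [P2 Q2]. split.
  { rewrite <- comp_assoc, P1, comp_assoc, P2, comp_assoc. reflexivity. }
  set (K := pair (p0 ;; iota0 A A) (@p1 X A (prod A A))) in *.
  rewrite (rd5 X), (rd5 X).
  set (Y := times g1 (idm (prod A A)) ;; K ;; RD G2).
  assert (Kp0 : K ;; p0 = p0 ;; iota0 A A) by (unfold K; apply pair_p0_tot; tot2).
  assert (Kp1 : K ;; p1 = p1) by (unfold K; apply pair_p1_tot; tot2).
  assert (E1 : K ;; pair (p0 ;; G1) p1 = times g1 (idm (prod A A)) ;; K).
  { apply pair_ext.
    - rewrite comp_assoc, pair_p0_tot by tot2. rewrite <- comp_assoc, Kp0, comp_assoc, P1.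
      rewrite (comp_assoc _ _ _ _ _ (times g1 (idm (prod A A)))), Kp0, <- comp_assoc.
      rewrite <- (comp_assoc _ _ _ _ _ (times g1 _) p0), times_p0_tot by apply rst_idm. reflexivity.
    - rewrite comp_assoc, pair_p1.
      rewrite <- (comp_assoc _ _ _ _ _ K (rst _) p1), rst_R4, <- (comp_assoc _ _ _ _ _ K p0 G1), Kp0.
      rewrite (comp_assoc _ _ _ _ _ p0 (iota0 A A) G1), P1, (comp_assoc _ _ _ _ _ (rst _) K p1), Kp1.
      rewrite (comp_assoc _ _ _ _ _ (times g1 _) K p1), Kp1, times_p1, comp_id_r.
      rewrite <- (comp_assoc _ _ _ _ _ p0 g1), (rst_total (p0 ;; g1) (iota0 A A)) by tot2.
      reflexivity. }
  assert (E3 : pair (p0 ;; iota0 A A) Y = pair p0 Y ;; K).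
  { apply pair_ext.
    - rewrite (pair_p0 _ _ _ _ (p0 ;; iota0 A A) Y), (comp_assoc _ _ _ _ _ (pair p0 Y) K p0), Kp0, <- (comp_assoc _ _ _ _ _ (pair p0 Y) p0), (pair_p0 _ _ _ _ p0 Y). ra. reflexivity.
    - rewrite pair_p1_tot by tot2. rewrite comp_assoc, Kp1, pair_p1_p0. reflexivity. }
  assert (E4 : pair p0 Y ;; times (idm A) p1 = pair p0 (Y ;; p1)).
  { rewrite pair_times, comp_id_r, p0_total, comp_id_l.
    rewrite <- (rst_total Y p1) by apply p1_total. apply pair_absorb_l. }
  assert (E5 : times g1 (idm (prod A A)) ;; times (idm A) p1 = pair (p0 ;; g1) (p1 ;; p1)).
  { apply pair_ext.
    - rewrite comp_assoc, times_p0_tot, comp_id_r by apply p1_total.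
      rewrite times_p0_tot by apply rst_idm. rewrite pair_p0, (rst_total (@p1 X A (prod A A)) (@p1 X A A)), p1_total, comp_id_l by apply p1_total.
      reflexivity.
    - rewrite comp_assoc, times_p1_tot by apply rst_idm.
      rewrite <- comp_assoc, times_p1, comp_id_r, pair_p1. ra. reflexivity. }
  assert (E7 : times (idm A) (@p1 X A A) ;; pair (p0 ;; g1) (@p1 X A A) = pair (p0 ;; g1) (p1 ;; p1)).
  { rewrite comp_pair, <- (comp_assoc _ _ _ _ _ (times (idm A) _) p0 g1), times_p0_tot, times_p1_tot by tot2. rewrite comp_id_r. reflexivity. }
  rewrite <- (comp_assoc _ _ _ _ _ K), comp_pair, Kp0, <- comp_assoc, E1.
  fold Y. rewrite E3.
  transitivity (pair p0 Y ;; (K ;; RD G1 ;; p1)); [ra; reflexivity|].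
  rewrite Q1, <- comp_assoc, E4.
  assert (Yp1 : Y ;; p1 = pair (p0 ;; g1) (p1 ;; p1) ;; RD g2).
  { unfold Y. transitivity (times g1 (idm (prod A A)) ;; (K ;; RD G2 ;; p1)); [ra; reflexivity|].
    rewrite Q2, <- comp_assoc, E5. reflexivity. }
  rewrite Yp1.
  rewrite <- comp_assoc, comp_pair, times_p0_tot by apply p1_total.
  rewrite <- comp_assoc, E7, comp_id_r. reflexivity.
Qed.

Lemma K_p1 (X : RDRC) (A : X) : pair (p0 ;; iota0 A A) (@p1 X A (prod A A)) ;; p1 = p1.
Proof. apply pair_p1_tot. tot2. Qed.
Lemma K_p0 (X : RDRC) (A : X) : pair (p0 ;; iota0 A A) (@p1 X A (prod A A)) ;; p0 = p0 ;; iota0 A A.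
Proof. apply pair_p0_tot. tot2. Qed.

Lemma PQ_id (X : RDRC) (A : X) : PQ X (idm (prod A A)) (idm A).
Proof.
  split.
  - rewrite comp_id_r, comp_id_l. reflexivity.
  - rewrite !R_idm, K_p1, times_p1_tot by apply rst_idm. reflexivity.
Qed.

Lemma PQ_rst (X : RDRC) {A Z : X} (b : Hom A Z) : PQ X (rst (p0 ;; b)) (rst b).
Proof.
  split.
  - rewrite rst_R4, <- comp_assoc, iota0_p0, comp_id_l. reflexivity.
  - set (K := pair (p0 ;; iota0 A A) (@p1 X A (prod A A))).
    assert (Kp0 : K ;; p0 = p0 ;; iota0 A A) by apply K_p0.
    assert (Kp1 : K ;; p1 = p1) by apply K_p1.
    rewrite !R_rst, <- comp_assoc, rst_R4.
    assert (L : K ;; (p0 ;; (p0 ;; b)) = p0 ;; b).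
    { rewrite <- comp_assoc, Kp0, comp_assoc, <- (comp_assoc _ _ _ _ _ (iota0 A A) p0), iota0_p0, comp_id_l. reflexivity. }
    rewrite L, (comp_assoc _ _ _ _ _ (rst (p0 ;; b)) K p1), Kp1.
    rewrite <- comp_assoc, rst_R4, <- (comp_assoc _ _ _ _ _ (times (idm A) p1) p0), times_p0_tot by apply p1_total.
    rewrite comp_id_r, (comp_assoc _ _ _ _ _ (rst _) (times (idm A) p1) p1), times_p1_tot by apply rst_idm. ra. reflexivity.
Qed.

Lemma PQ_T (X : RDRC) {A : X} (f : Hom A A) : PQ X (Tfd f) f.
Proof.
  unfold Tfd. split.
  - rewrite comp_pair, D0, <- comp_assoc, iota0_p0, comp_id_l.
    unfold iota0. rewrite comp_pair, comp_id_r, (comp_zero_r _ _ _ _ f). reflexivity.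
  - set (K := pair (p0 ;; iota0 A A) (@p1 X A (prod A A))).
    rewrite (rd4 X), comp_add_r, add_p1.
    assert (E2 : K ;; times (idm (prod A A)) p1 = times (idm A) p1 ;; times (iota0 A A) (idm A)).
    { unfold K. repeat apply pair_ext; simp; reflexivity. }
    assert (T2 : K ;; (times (idm (prod A A)) p1 ;; RD (Dfwd (@RD X) f)) ;; p1 = times (idm A) p1 ;; RD f).
    { rewrite <- comp_assoc, E2, <- (L1 X f). ra. reflexivity. }
    rewrite T2.
    rewrite (rd5 X), R_p0.
    set (Z := pair (p0 ;; p0) p1 ;; RD f).
    assert (T1 : K ;; (times (idm (prod A A)) p0 ;; (pair p0 Z ;; (p1 ;; iota0 A A))) ;; p1
                 = rst (K ;; times (idm (prod A A)) p0 ;; Z) ;; zero).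
    { rewrite <- comp_zero_r. ra. rewrite iota0_p1.
      rewrite <- (comp_assoc _ _ _ _ _ (pair p0 Z) p1), pair_p1_p0. reflexivity. }
    rewrite T1, zero_absorb. apply absorb.
    unfold Z. rewrite !rst_xR.
    assert (N : K ;; times (idm (prod A A)) p0 ;; pair (p0 ;; p0) p1 ;; p0 = p0).
    { unfold K. simp. reflexivity. }
    rewrite <- (comp_assoc _ _ _ _ _ (K ;; times (idm (prod A A)) p0) (pair (p0 ;; p0) p1) (RD f)), rst_xR, N.
    rewrite times_p0_tot, comp_id_r by apply p1_total. apply rst_idem.
Qed.

Lemma cnt_nat : countable nat.
Proof. exists (fun n => n). auto. Qed.

Lemma RJrst {C : ClarC} (HJ : has_countable_disjoint_joins C) {A B : C}
  (F : nat -> Hom A B) (j : Hom A B) :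
  pairwise_disjoint F -> is_join F j ->
  is_join (fun i => rst (F i)) (rst j) /\ pairwise_disjoint (fun i => rst (F i)).
Proof.
  intros Fd Hj.
  assert (Fd' : pairwise_disjoint (fun i => rst (F i))).
  { intros i k Hik. apply (disj_rst_eq HJ (F i) (F k)); try (symmetry; apply rst_rst). apply Fd; auto. }
  split; auto.
  destruct (HJ A A nat (fun i => rst (F i)) cnt_nat Fd') as [[E HE] Hc].
  specialize (Hc E HE A B (idm A) j).
  assert (Ej : j = idm A ;; E ;; j).
  { apply (join_unique F (fun i => idm A ;; rst (F i) ;; j)); auto.
    intro i. rewrite comp_id_l. symmetry. apply (proj1 Hj). }
  assert (Le : le E (rst j)).
  { apply (proj2 HE). intro i. unfold le. rewrite rst_rst, <- rst_R3, (proj1 Hj i). reflexivity. }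
  unfold le in Le.
  assert (Er : rst j = E).
  { rewrite Ej, comp_id_l. rewrite <- Le at 1. rewrite comp_assoc, rst_R1, rst_R3. exact Le. }
  rewrite Er. exact HE.
Qed.

Lemma RJ (X : RDRC) (HJ : has_countable_disjoint_joins X) {A B : X}
  (F : nat -> Hom A B) (j : Hom A B) :
  pairwise_disjoint F -> is_join F j ->
  is_join (fun i => RD (F i)) (RD j) /\ pairwise_disjoint (fun i => RD (F i)).
Proof.
  intros Fd Hj. split.
  2:{ intros i k Hik. apply (disj_rst_eq HJ (p0 ;; F i ;; idm B) (p0 ;; F k ;; idm B)).
      - rewrite comp_id_r. symmetry. apply R_rst_eq.
      - rewrite comp_id_r. symmetry. apply R_rst_eq.
      - apply disj_comp; auto. }
  destruct (RJrst HJ F j Fd Hj) as [J1 D1].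
  pose proof (proj2 (HJ A A nat _ cnt_nat D1) (rst j) J1 (prod A B) A p0 (idm A)) as J2.
  assert (D2 : pairwise_disjoint (fun i => @p0 X A B ;; rst (F i) ;; idm A)).
  { intros i k Hik. apply disj_comp; auto. }
  simpl in J2. destruct (RJrst HJ _ _ D2 J2) as [J3 D3].
  pose proof (proj2 (HJ _ _ nat _ cnt_nat D3) _ J3 _ _ (idm (prod A B)) (RD j)) as J4.
  simpl in J4.
  assert (Ej : idm (prod A B) ;; rst (p0 ;; rst j ;; idm A) ;; RD j = RD j).
  { rewrite comp_id_l, comp_id_r, rst_comp_rst, <- R_rst_eq. apply rst_R1. }
  rewrite Ej in J4.
  refine (is_join_ext _ _ _ _ J4).
  intro i. simpl. rewrite (R_le X (F i) j (proj1 Hj i)), comp_id_l, comp_id_r, rst_comp_rst. reflexivity.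
Qed.

Lemma PQ_pw (X : RDRC) {A Z : X} (f : Hom A A) (bT : Hom A Z) (i : nat) :
  PQ X (pw (rst (p0 ;; bT) ;; Tfd f) i) (pw (rst bT ;; f) i).
Proof.
  induction i; simpl.
  - apply PQ_id.
  - apply PQ_comp; auto. apply PQ_comp. apply PQ_rst. apply PQ_T.
Qed.

Theorem mainTheorem6 (X : RDRC) (HJ : has_countable_disjoint_joins X)
  (A : X) (f : Hom A A) (bT bF : Hom A one)
  (Hbb : nowhere_defined (rst bT ;; rst bF))
  (W : Hom A A) (W' : Hom (prod A A) (prod A A))
  (HW : is_join (fun i : nat => pw (rst bT ;; f) i ;; rst bF) W)
  (HW' : is_join (fun i : nat => pw (rst (p0 ;; bT) ;; Tfd f) i ;; rst (p0 ;; bF)) W') :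
  RD W = times (iota0 A A) (idm A) ;; RD (W' ;; p1) ;; p1.
Proof.
  assert (N1 : nowhere_defined (rst bF ;; rst bT)) by (rewrite rst_R2; exact Hbb).
  assert (N2 : nowhere_defined (rst bF ;; bT)).
  { rewrite <- (rst_R1 _ _ _ bT), <- comp_assoc. apply ND_comp_r; auto. }
  assert (DF : pairwise_disjoint (fun i : nat => pw (rst bT ;; f) i ;; rst bF)).
  { apply pw_disjoint; auto. rewrite <- comp_assoc. apply ND_comp_r; auto. }
  assert (DG : pairwise_disjoint (fun i : nat => pw (rst (p0 ;; bT) ;; Tfd f) i ;; rst (p0 ;; bF))).
  { apply pw_disjoint; auto. rewrite <- comp_assoc. apply ND_comp_r; auto.
    rewrite <- rst_R3, <- comp_assoc, <- rst_R4, comp_assoc.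
    apply ND_rst; auto. apply ND_comp_l; auto. }
  destruct (RJ X HJ _ _ DF HW) as [RF RFd].
  destruct (RJ X HJ _ _ DG HW') as [RG RGd].
  set (K := pair (p0 ;; iota0 A A) (@p1 X A (prod A A))).
  pose proof (proj2 (HJ _ _ nat _ cnt_nat RGd) _ RG _ _ K p1) as JG.
  pose proof (proj2 (HJ _ _ nat _ cnt_nat RFd) _ RF _ _ (times (idm A) (@p1 X A A)) (idm A)) as JF.
  simpl in JG, JF.
  assert (Q : K ;; RD W' ;; p1 = times (idm A) p1 ;; RD W ;; idm A).
  { refine (join_unique _ _ _ _ _ JG JF). intro i. simpl. rewrite comp_id_r.
    exact (proj2 (PQ_comp X _ _ _ _ (PQ_pw X f bT i) (PQ_rst X bF))). }
  rewrite comp_id_r in Q.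
  rewrite R_p1post.
  assert (E1 : times (iota0 A A) (idm A) ;; times (idm (prod A A)) (iota1 A A) = times (idm A) (iota1 A A) ;; K).
  { unfold K. repeat apply pair_ext; simp; reflexivity. }
  assert (E2 : times (idm A) (iota1 A A) ;; times (idm A) (@p1 X A A) = idm (prod A A)).
  { repeat apply pair_ext; simp; reflexivity. }
  transitivity (times (idm A) (iota1 A A) ;; (K ;; RD W' ;; p1)).
  2:{ transitivity ((times (idm A) (iota1 A A) ;; K) ;; RD W' ;; p1); [ra; reflexivity|]. rewrite <- E1. ra. reflexivity. }
  rewrite Q, <- comp_assoc, E2, comp_id_l. reflexivity.
Qed.
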